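(* Let $q\in(0,1)$, $\alpha\in(-1,1)$ and $\beta<1$ real. If $\beta\le\alpha$, then the discrete part $\mu_d$ of the orthogonality measure $\mu$ of the polynomials $p_n^{(\alpha,\beta)}(\cdot;q)$ vanishes.
   Context: The monic polynomials $p_n=p_n^{(\alpha,\beta)}(x;q)$ satisfy $p_{-1}=0$, $p_0=1$, $p_{n+1}(x)=xp_n(x)-\tilde\gamma_{n-1}\tilde\gamma_np_{n-1}(x)$ for $n\in\mathbb{N}_0$, where $\tilde\gamma_n=(1-\alpha q^n)/(1-\beta q^n)$. $\mu$ is the Borel probability measure on $\mathbb{R}$ with $\int p_mp_n\,{\rm d}\mu=\delta_{m,n}\prod_{j=0}^{n-1}\tilde\gamma_j\tilde\gamma_{j+1}$, and $\mu_d$ is its discrete (atomic) part. *)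

(* Defs.v *)
From HB Require Import structures.
From mathcomp Require Import all_boot all_order all_algebra.
From mathcomp Require Import all_classical all_reals all_analysis.
Set Implicit Arguments. Unset Strict Implicit. Unset Printing Implicit Defensive.
Import Order.TTheory GRing.Theory Num.Theory.
Local Open Scope classical_set_scope.
Local Open Scope ring_scope.

Definition gammat {R : realType} (a b q : R) (n : nat) : R :=
  (1 - a * q ^+ n) / (1 - b * q ^+ n).

(* pq_pair n = (p_n, p_{n-1}), with p_{-1} = 0, p_0 = 1 and
   p_{n+1} = X p_n - gammat_{n-1} gammat_n p_{n-1}.
   For n = 0 the coefficient multiplies p_{-1} = 0, so the value used for
   gammat_{-1} (here gammat_0, by truncated subtraction) is irrelevant. *)
Fixpoint pq_pair {R : realType} (a b q : R) (n : nat) : {poly R} * {poly R} :=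
  match n with
  | 0%N => (1, 0)
  | n'.+1 => let: (p, pm) := pq_pair a b q n' in
      ('X * p - (gammat a b q n'.-1 * gammat a b q n') *: pm, p)
  end.

Definition pq {R : realType} (a b q : R) (n : nat) : {poly R} :=
  (pq_pair a b q n).1.

Definition pq_norm {R : realType} (a b q : R) (n : nat) : R :=
  \prod_(0 <= j < n) (gammat a b q j * gammat a b q j.+1).

Definition discrete_part {R : realType} (mu : set R -> \bar R) (A : set R) : \bar R :=
  (\esum_(x in A) mu [set x])%E.

(* Main.v *)
Require Import Defs.
From HB Require Import structures.
From mathcomp Require Import all_boot all_order all_algebra.
From mathcomp Require Import all_classical all_reals all_analysis.
From mathcomp Require Import ring lra.
Import Order.TTheory GRing.Theory Num.Theory.
Local Open Scope classical_set_scope.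
Local Open Scope ring_scope.

Section Alg.
Variables (R : realType) (q a b : R).
Hypotheses (hq0 : 0 < q) (hq1 : q < 1) (ha2 : a < 1) (hb : b < 1) (hba : b <= a).

Lemma qn_bounds n : 0 < q ^+ n <= 1.
Proof. by rewrite exprn_gt0 //= exprn_ile1 // ltW. Qed.

Lemma gam_pos n : 0 < gammat a b q n.
Proof.
rewrite /gammat; have /andP[t0 t1] := qn_bounds n.
have k1 : 0 < q ^+ n * (1 - a) by rewrite mulr_gt0 // subr_gt0.
have k2 : 0 < q ^+ n * (1 - b) by rewrite mulr_gt0 // subr_gt0.
apply: divr_gt0; nra.
Qed.

Lemma gam_le1 n : gammat a b q n <= 1.
Proof.
rewrite /gammat; have /andP[t0 t1] := qn_bounds n.
have k2 : 0 < q ^+ n * (1 - b) by rewrite mulr_gt0 // subr_gt0.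
have hd : 0 < 1 - b * q ^+ n by nra.
have k5 : 0 <= (a - b) * q ^+ n by rewrite mulr_ge0 // ?subr_ge0 // ltW.
rewrite ler_pdivrMr // mul1r; nra.
Qed.

Lemma gam_mono n : gammat a b q n <= gammat a b q n.+1.
Proof.
rewrite /gammat; have /andP[t0 t1] := qn_bounds n.
rewrite exprS.
have k2 : 0 < q ^+ n * (1 - b) by rewrite mulr_gt0 // subr_gt0.
have k3 : 0 < q * q ^+ n * (1 - b) by rewrite !mulr_gt0 // subr_gt0.
have k4 : 0 <= (q ^+ n - q * q ^+ n) * (a - b) by rewrite mulr_ge0 // subr_ge0 // ler_piMl // ltW.
have hd : 0 < 1 - b * q ^+ n by nra.
have k6 : q * q ^+ n <= q ^+ n by rewrite ler_piMl // ltW.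
have hd' : 0 < 1 - b * (q * q ^+ n) by nra.
rewrite ler_pdivrMr // mulrAC ler_pdivlMr //; nra.
Qed.

Definition dd n := gammat a b q n * gammat a b q n.+1.

Lemma dd_pos n : 0 < dd n.
Proof. by rewrite /dd mulr_gt0 // gam_pos. Qed.

Lemma dd_le1 n : dd n <= 1.
Proof.
rewrite /dd -[1](mulr1 1); apply: ler_pM; [apply/ltW/gam_pos|apply/ltW/gam_pos|apply: gam_le1|apply: gam_le1].
Qed.

Lemma dd_mono n : dd n <= dd n.+1.
Proof.
rewrite /dd; apply: ler_pM; [apply/ltW/gam_pos|apply/ltW/gam_pos|apply: gam_mono|apply: gam_mono].
Qed.

Lemma pq0 : pq a b q 0 = 1. Proof. by []. Qed.
Lemma pq1 : pq a b q 1 = 'X.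
Proof. by rewrite /pq /= scaler0 subr0 mulr1. Qed.

Lemma pq_pairS n : pq_pair a b q n.+1 =
  ('X * (pq_pair a b q n).1 - (gammat a b q n.-1 * gammat a b q n) *: (pq_pair a b q n).2,
   (pq_pair a b q n).1).
Proof. by rewrite /=; case: (pq_pair a b q n). Qed.

Lemma pqSS n : pq a b q n.+2 = 'X * pq a b q n.+1 - dd n *: pq a b q n.
Proof. by rewrite /pq pq_pairS [in X in _ *: X]pq_pairS. Qed.

Lemma norm0 : pq_norm a b q 0 = 1.
Proof. by rewrite /pq_norm big_geq. Qed.

Lemma normS n : pq_norm a b q n.+1 = pq_norm a b q n * dd n.
Proof. by rewrite /pq_norm big_nat_recr. Qed.

Lemma norm_pos n : 0 < pq_norm a b q n.
Proof. elim: n => [|n IH]; first by rewrite norm0. by rewrite normS mulr_gt0 // dd_pos. Qed.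

Variable x : R.
Let p n := (pq a b q n).[x].
Let h n := pq_norm a b q n.
Definition TT n := (pq a b q n).[x] ^+ 2 / pq_norm a b q n.

Lemma TT_ge0 n : 0 <= TT n.
Proof. by rewrite /TT divr_ge0 ?sqr_ge0 // ltW // norm_pos. Qed.

Definition RR n := ((pq a b q n.+1).[x] ^+ 2 - x * (pq a b q n.+1).[x] * (pq a b q n).[x]
   + dd n * (pq a b q n).[x] ^+ 2) / pq_norm a b q n.

Lemma RR_ge n : dd 0 <= RR n.
Proof.
elim: n => [|n IH].
  rewrite /RR pq1 pq0 norm0 hornerX hornerC divr1 expr1n mulr1 mulr1 -expr2 subrr add0r; lra.
apply: le_trans IH _.
have -> : RR n.+1 = RR n + (dd n.+1 - dd n) * TT n.+1.
  rewrite /RR /TT pqSS normS hornerD hornerN hornerZ hornerM hornerX.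
  have := norm_pos n; have := dd_pos n.
  set A := (pq a b q n.+1).[x]; set B := (pq a b q n).[x].
  set H := pq_norm a b q n; set c := dd n; set c' := dd n.+1 => h1 h2.
  by field; apply/andP; split; rewrite gt_eqF.
rewrite lerDl mulr_ge0 ?TT_ge0 // subr_ge0 dd_mono //.
Qed.

Lemma RR_le n : RR n <= (1 + `|x|) * (TT n.+1 + TT n).
Proof.
rewrite /RR /TT normS.
set A := (pq a b q n.+1).[x]; set B := (pq a b q n).[x].
set H := pq_norm a b q n; set c := dd n.
have hH : 0 < H by apply: norm_pos.
have hc : 0 < c by apply: dd_pos.
have hc1 : c <= 1 by apply: dd_le1.
have e : (1 + `|x|) * (A ^+ 2 / (H * c) + B ^+ 2 / H) =
   ((1 + `|x|) * (A ^+ 2 + c * B ^+ 2)) / c / H.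
  by field; apply/andP; split; rewrite gt_eqF.
rewrite e ler_pM2r ?invr_gt0 // ler_pdivlMr //.
have hx : - (`|x| * (`|A| * `|B|)) <= x * A * B.
  rewrite -!normrM -mulrA lerNnormlW //.
have huv : `|A| * `|B| * 2 <= A ^+ 2 + B ^+ 2.
  rewrite -(real_normK (num_real A)) -(real_normK (num_real B)).
  have := sqr_ge0 (`|A| - `|B|); rewrite sqrrB; lra.
have hcuv : c * (`|A| * `|B|) <= A ^+ 2 + c * B ^+ 2.
  have hA : 0 <= A ^+ 2 := sqr_ge0 A.
  have hB : 0 <= B ^+ 2 := sqr_ge0 B.
  nra.
have hy : 0 <= `|x| := normr_ge0 x.
have hy2 : c * (`|x| * (`|A| * `|B|)) <= `|x| * (A ^+ 2 + c * B ^+ 2).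
  by rewrite mulrCA ler_wpM2l.
have hA : 0 <= A ^+ 2 := sqr_ge0 A.
have hB : 0 <= B ^+ 2 := sqr_ge0 B.
have e1 : c * A ^+ 2 <= A ^+ 2 by rewrite ler_piMl.
have e2 : c * (c * B ^+ 2) <= c * B ^+ 2 by rewrite ler_piMl // mulr_ge0 // ltW.
have e3 : c * (- (`|x| * (`|A| * `|B|))) <= c * (x * A * B) by rewrite ler_wpM2l // ltW.
have e4 : `|x| * (A ^+ 2 + c * B ^+ 2) >= 0 by rewrite mulr_ge0 // addr_ge0 // mulr_ge0 // ltW.

nra.
Qed.

Lemma TT_pair n : dd 0 / (1 + `|x|) <= TT n.+1 + TT n.
Proof.
have hx : 0 < 1 + `|x| by rewrite ltr_pwDl // normr_ge0.
rewrite ler_pdivrMr //; apply: le_trans (RR_ge n) _.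
by rewrite mulrC; apply: RR_le.
Qed.

Lemma TT_sum k : k%:R * (dd 0 / (1 + `|x|)) <= \sum_(i < (2 * k)%N) TT i.
Proof.
elim: k => [|k IH]; first by rewrite mul0r big_ord0.
rewrite (_ : (2 * k.+1)%N = (2 * k).+2); last by rewrite mulnS.
rewrite !big_ord_recr /= -addrA mulrSr mulrDl mul1r.
by apply: lerD => //; rewrite addrC; apply: TT_pair.
Qed.

End Alg.

Lemma key (R : realType) (q a b : R)
  (mu : probability R R)
  (hint : forall m n : nat,
      mu.-integrable setT (fun x => ((pq a b q m).[x] * (pq a b q n).[x])%:E))
  (horth : forall m n : nat,
      (\int[mu]_x ((pq a b q m).[x] * (pq a b q n).[x])%:E)%E
      = (if m == n then pq_norm a b q n else 0)%:E)
  (hpos : forall n, 0 < pq_norm a b q n)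
  (x0 r : R) (hr : mu [set x0] = r%:E) (N : nat) :
  (\sum_(i < N) @TT R q a b x0 i) ^+ 2 * r <= \sum_(i < N) @TT R q a b x0 i.
Proof.
set S := \sum_(i < N) @TT R q a b x0 i.
pose w i := (pq a b q i).[x0] / pq_norm a b q i.
pose K y := \sum_(i < N) w i * (pq a b q i).[y].
have Ksq y : K y ^+ 2 = \sum_(i < N) \sum_(j < N) (w i * w j) * ((pq a b q i).[y] * (pq a b q j).[y]).
  rewrite expr2 /K mulr_suml; apply: eq_bigr => i _; rewrite mulr_sumr.
  by apply: eq_bigr => j _; rewrite mulrACA.
have eqf : (fun y => (K y ^+ 2)%:E) = (fun y => (\sum_(i < N) \sum_(j < N)
     (w i * w j)%:E * ((pq a b q i).[y] * (pq a b q j).[y])%:E)%E).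
  apply: funext => y; rewrite Ksq -sumEFin; apply: eq_bigr => i _.
  by rewrite -sumEFin; apply: eq_bigr => j _; rewrite EFinM.
have intj i : mu.-integrable setT (fun y => (\sum_(j < N)
     (w i * w j)%:E * ((pq a b q i).[y] * (pq a b q j).[y])%:E)%E).
  by apply: integrable_sum => // j _; apply: integrableZl => //; apply: hint.
have intK : mu.-integrable setT (fun y => (K y ^+ 2)%:E).
  by rewrite eqf; apply: integrable_sum => // i _; apply: intj.
have KS : K x0 = S.
  by rewrite /K /S; apply: eq_bigr => i _; rewrite /w /TT mulrAC -expr2.
have I1 : (\int[mu]_y (K y ^+ 2)%:E = S%:E)%E.
  rewrite eqf integral_sum //.
  transitivity (\sum_(i < N) \sum_(j < N) (w i * w j * (if (i : nat) == j then pq_norm a b q j else 0))%:E)%E.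
    apply: eq_bigr => i _; rewrite integral_sum //; last first.
      by move=> j; apply: integrableZl => //; apply: hint.
    apply: eq_bigr => j _; rewrite integralZl //.
    by rewrite horth -EFinM.
  under eq_bigr do rewrite sumEFin.
  rewrite sumEFin; congr EFin; rewrite /S; apply: eq_bigr => i _.
  rewrite (bigD1 i) //= eqxx big1 ?addr0; last first.
    by move=> j /negbTE ji; rewrite eq_sym -(inj_eq val_inj) /= in ji; rewrite ji mulr0.
  rewrite /w /TT; have := hpos i; move=> hp; field; rewrite gt_eqF //.
have I2 : ((S ^+ 2)%:E * r%:E <= \int[mu]_y (K y ^+ 2)%:E)%E.
  rewrite -hr -KS -(setIT [set x0]) -integral_indic //.
  rewrite -ge0_integralZl_EFin //; last by apply: sqr_ge0.
  apply: ge0_le_integral => //.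
  - by move=> y _; rewrite -EFinM lee_fin mulr_ge0 // ?sqr_ge0 // /indic; case: (_ \in _).
  - by apply/measurable_realfun.measurable_EFinP; apply: measurable_realfun.measurable_funM => //.
  - by apply: measurable_int intK.
  move=> y _; rewrite -EFinM lee_fin /indic.
  case: (boolP (y \in [set x0])) => [/set_mem /= ->|_]; first by rewrite mulr1.
  by rewrite mulr0 sqr_ge0.
by apply/measurable_realfun.measurable_EFinP; apply: measurable_realfun.measurable_indic.
move: I2; rewrite I1 -EFinM lee_fin => I2.
by [].
Qed.

Theorem proposition2p13 (R : realType) (q a b : R)
  (hq0 : 0 < q) (hq1 : q < 1) (ha1 : -1 < a) (ha2 : a < 1) (hb : b < 1)
  (mu : probability R R)
  (hint : forall m n : nat,
      mu.-integrable setT (fun x => ((pq a b q m).[x] * (pq a b q n).[x])%:E))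
  (horth : forall m n : nat,
      (\int[mu]_x ((pq a b q m).[x] * (pq a b q n).[x])%:E)%E
      = (if m == n then pq_norm a b q n else 0)%:E) :
  b <= a -> forall A : set R, measurable A -> discrete_part mu A = 0%E.
Proof.
move=> hba A mA; rewrite /discrete_part; apply: esum1 => x0 _.
have m0 : (0 <= mu [set x0])%E by apply: measure_ge0.
have m1 := probability_le1 mu (measurable_set1 x0).
case E: (mu [set x0]) => [r| |]; rewrite E in m0 m1 => //.
rewrite !lee_fin in m0 m1.
congr EFin; apply/eqP; rewrite eq_le m0 andbT leNgt; apply/negP => rpos.
have hx : 0 < 1 + `|x0| by rewrite ltr_pwDl // normr_ge0.
set del := dd R q a b 0 / (1 + `|x0|).
have hdel : 0 < del by rewrite divr_gt0 // dd_pos.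
have hdr : 0 < del * r by rewrite mulr_gt0.
set k := Num.Def.archi_bound (1 / (del * r)).
have hk : 1 / (del * r) < k%:R by apply: archi_boundP; rewrite ltW // divr_gt0.
have hT := @TT_sum R q a b hq0 hq1 ha2 hb hba x0 k.
have hkey := @key R q a b mu hint horth (@norm_pos R q a b hq0 hq1 ha2 hb) x0 r E (2 * k).
set S := \sum_(i < (2 * k)%N) TT R q a b x0 i in hT hkey.
have hk1 : 1 < k%:R * (del * r) by rewrite -ltr_pdivrMr.
have hkpos : 0 < k%:R :> R.
  by apply: le_lt_trans hk; rewrite ltW // divr_gt0.
have Spos : 0 < S by apply: lt_le_trans hT; rewrite mulr_gt0.
have Sr : S * r <= 1.
  by rewrite -(ler_pM2l Spos) mulr1 mulrA -expr2.
have : k%:R * del * r <= S * r by rewrite ler_wpM2r // ltW.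
rewrite -mulrA => h1.
have := le_trans h1 Sr; rewrite leNgt hk1 //.
Qed.
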